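(* On the Lie algebra $\mathfrak{r}_2\mathfrak{r}_2$ with basis $e_1,\dots,e_4$, non-zero brackets $[e_1,e_2]=e_2$, $[e_3,e_4]=e_4$, and orientation $\mu=e^{1234}$, define $J$ by $Je_1=\tfrac{1}{\sqrt2}(e_2-e_4)$, $Je_2=\tfrac{1}{\sqrt2}(-e_1-e_3)$, $Je_3=\tfrac{1}{\sqrt2}(e_2+e_4)$, $Je_4=\tfrac{1}{\sqrt2}(e_1-e_3)$. Then $J$ is an almost complex structure inducing the orientation $\mu$, $J$ is tamed by the symplectic form $e^{12}+e^{34}$, and $J$ is not compatible with any symplectic form on $\mathfrak{r}_2\mathfrak{r}_2$. *)

(* Defs.v *)
(* The Lie algebra r2r2 = R^4 (coordinates w.r.t. e1..e4,
   0-indexed), over an arbitrary real closed field R (e.g. the reals). *)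
From HB Require Import structures.
From mathcomp Require Import all_boot all_order all_algebra.
Set Implicit Arguments. Unset Strict Implicit. Unset Printing Implicit Defensive.
Import Order.TTheory GRing.Theory Num.Theory.
Local Open Scope ring_scope.

Section Defs.
Variable R : rcfType.

Definition coord4 (x : 'cV[R]_4) (k : nat) : R := x (inord k) 0.

Definition br (x y : 'cV[R]_4) : 'cV[R]_4 :=
  \col_(k < 4)
    (if nat_of_ord k == 1%N then coord4 x 0 * coord4 y 1 - coord4 x 1 * coord4 y 0
     else if nat_of_ord k == 3%N then coord4 x 2 * coord4 y 3 - coord4 x 3 * coord4 y 2
     else 0).

Definition bform (W : 'M[R]_4) (x y : 'cV[R]_4) : R := (x^T *m W *m y) 0 0.

Definition is_2form (W : 'M[R]_4) : Prop := W^T = - W.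

(* closedness in the Chevalley-Eilenberg complex:
   dw(x,y,z) = -w([x,y],z) + w([x,z],y) - w([y,z],x) = 0 *)
Definition closed_form (W : 'M[R]_4) : Prop :=
  forall x y z : 'cV[R]_4,
    - bform W (br x y) z + bform W (br x z) y - bform W (br y z) x = 0.

Definition symplectic (W : 'M[R]_4) : Prop :=
  [/\ is_2form W, closed_form W & \det W != 0].

Definition almost_complex (J : 'M[R]_4) : Prop := J *m J = - 1%:M.

Definition mx4 (a b c d : 'cV[R]_4) : 'M[R]_4 :=
  \matrix_(i < 4, j < 4)
    (match nat_of_ord j with 0 => a | 1 => b | 2 => c | _ => d end) i 0.

(* J induces the orientation mu = e^{1234}: every basis of the form
   (v, Jv, w, Jw) is positively oriented w.r.t. e1,e2,e3,e4 (and such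
   bases exist). *)
Definition induces_std_orientation (J : 'M[R]_4) : Prop :=
  (exists v w : 'cV[R]_4, \det (mx4 v (J *m v) w (J *m w)) != 0) /\
  (forall v w : 'cV[R]_4, \det (mx4 v (J *m v) w (J *m w)) != 0 ->
       0 < \det (mx4 v (J *m v) w (J *m w))).

Definition tamed (J W : 'M[R]_4) : Prop :=
  forall x : 'cV[R]_4, x != 0 -> 0 < bform W x (J *m x).

Definition compatible (J W : 'M[R]_4) : Prop :=
  tamed J W /\ forall x y : 'cV[R]_4, bform W (J *m x) (J *m y) = bform W x y.

(* the matrix with integer entries (row i = coefficient of e_(i+1)) *)
Definition intmx (rows : seq (seq int)) : 'M[R]_4 :=
  \matrix_(i < 4, j < 4) (nth 0 (nth [::] rows i) j)%:~R.

(* J e1 = (e2 - e4)/sqrt2, J e2 = (-e1 - e3)/sqrt2,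
   J e3 = (e2 + e4)/sqrt2, J e4 = (e1 - e3)/sqrt2 ; column j = J e_(j+1) *)
Definition Jr2r2 : 'M[R]_4 :=
  (Num.sqrt 2)^-1 *:
    intmx [:: [:: 0; -1;  0;  1];
              [:: 1;  0;  1;  0];
              [:: 0; -1;  0; -1];
              [:: -1; 0;  1;  0]]%Z.

Definition omega0 : 'M[R]_4 :=
  intmx [:: [:: 0; 1; 0; 0];
            [:: -1; 0; 0; 0];
            [:: 0; 0; 0; 1];
            [:: 0; 0; -1; 0]]%Z.

End Defs.

(* Main.v *)
Require Import Defs.
From HB Require Import structures.
From mathcomp Require Import all_boot all_order all_algebra ring lra.
Import Order.TTheory GRing.Theory Num.Theory.
Local Open Scope ring_scope.

Section Aux.
Variable R : rcfType.
Definition o0 : 'I_4 := @Ordinal 4 0 isT.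
Definition o1 : 'I_4 := @Ordinal 4 1 isT.
Definition o2 : 'I_4 := @Ordinal 4 2 isT.
Definition o3 : 'I_4 := @Ordinal 4 3 isT.
Definition fix4 (i : 'I_4) : 'I_4 :=
  match nat_of_ord i with 0 => o0 | 1 => o1 | 2 => o2 | _ => o3 end.
Lemma fix4E i : fix4 i = i.
Proof. by apply/val_inj; case: i => [[|[|[|[|m]]]] Hm]. Qed.
Lemma ord4P (P : 'I_4 -> Prop) : P o0 -> P o1 -> P o2 -> P o3 -> forall i, P i.
Proof. by move=> ? ? ? ? i; rewrite -[i]fix4E; case: i => [[|[|[|[|m]]]] Hm]. Qed.
Lemma mxfix m n (A : 'M[R]_(m, n)) (f : 'I_m -> 'I_m) (g : 'I_n -> 'I_n) :
  (forall i, f i = i) -> (forall j, g j = j) -> A = \matrix_(i, j) A (f i) (g j).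
Proof. by move=> hf hg; apply/matrixP=> i j; rewrite mxE hf hg. Qed.

Definition vec4 (a b c d : R) : 'cV[R]_4 := \col_(i < 4) nth 0 [:: a; b; c; d] i.
Lemma cV4E (x : 'cV[R]_4) : x = vec4 (x o0 0) (x o1 0) (x o2 0) (x o3 0).
Proof.
apply/matrixP=> i j; rewrite !mxE (ord1 j); move: i; apply: ord4P => //.
Qed.

Lemma det4 (A : 'M[R]_4) : \det A =
  A o0 o0 * A o1 o1 * A o2 o2 * A o3 o3
  - A o0 o0 * A o1 o1 * A o2 o3 * A o3 o2
  - A o0 o0 * A o1 o2 * A o2 o1 * A o3 o3
  + A o0 o0 * A o1 o2 * A o2 o3 * A o3 o1
  + A o0 o0 * A o1 o3 * A o2 o1 * A o3 o2
  - A o0 o0 * A o1 o3 * A o2 o2 * A o3 o1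
  - A o0 o1 * A o1 o0 * A o2 o2 * A o3 o3
  + A o0 o1 * A o1 o0 * A o2 o3 * A o3 o2
  + A o0 o1 * A o1 o2 * A o2 o0 * A o3 o3
  - A o0 o1 * A o1 o2 * A o2 o3 * A o3 o0
  - A o0 o1 * A o1 o3 * A o2 o0 * A o3 o2
  + A o0 o1 * A o1 o3 * A o2 o2 * A o3 o0
  + A o0 o2 * A o1 o0 * A o2 o1 * A o3 o3
  - A o0 o2 * A o1 o0 * A o2 o3 * A o3 o1
  - A o0 o2 * A o1 o1 * A o2 o0 * A o3 o3
  + A o0 o2 * A o1 o1 * A o2 o3 * A o3 o0
  + A o0 o2 * A o1 o3 * A o2 o0 * A o3 o1
  - A o0 o2 * A o1 o3 * A o2 o1 * A o3 o0
  - A o0 o3 * A o1 o0 * A o2 o1 * A o3 o2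
  + A o0 o3 * A o1 o0 * A o2 o2 * A o3 o1
  + A o0 o3 * A o1 o1 * A o2 o0 * A o3 o2
  - A o0 o3 * A o1 o1 * A o2 o2 * A o3 o0
  - A o0 o3 * A o1 o2 * A o2 o0 * A o3 o1
  + A o0 o3 * A o1 o2 * A o2 o1 * A o3 o0.
Proof.
have detS n (B : 'M[R]_n.+1) : \det B =
   \sum_(j < n.+1) B 0 j * ((-1) ^+ j * \det (row' 0 (col' j B))).
  by rewrite (expand_det_row _ 0); apply: eq_bigr => j _; rewrite /cofactor add0n.
rewrite {1}(@mxfix _ _ A _ _ fix4E fix4E).
rewrite detS !big_ord_recl big_ord0 !detS !big_ord_recl big_ord0 /=.
rewrite !detS !big_ord_recl !big_ord0 /= !det_mx11 !mxE /=.
ring.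
Qed.

Lemma mulmx_vec4 (A : 'M[R]_4) a b c d : A *m vec4 a b c d =
  vec4 (A o0 o0 * a + A o0 o1 * b + A o0 o2 * c + A o0 o3 * d)
       (A o1 o0 * a + A o1 o1 * b + A o1 o2 * c + A o1 o3 * d)
       (A o2 o0 * a + A o2 o1 * b + A o2 o2 * c + A o2 o3 * d)
       (A o3 o0 * a + A o3 o1 * b + A o3 o2 * c + A o3 o3 * d).
Proof.
rewrite {1}(@mxfix _ _ A _ _ fix4E fix4E).
apply/matrixP=> i j; rewrite !mxE !big_ord_recl big_ord0 /= !mxE /=.
move: i; apply: ord4P => /=; ring.
Qed.

Lemma bform_vec4 (W : 'M[R]_4) a b c d a' b' c' d' :
  bform W (vec4 a b c d) (vec4 a' b' c' d') =
  a * (W o0 o0 * a' + W o0 o1 * b' + W o0 o2 * c' + W o0 o3 * d')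
  + b * (W o1 o0 * a' + W o1 o1 * b' + W o1 o2 * c' + W o1 o3 * d')
  + c * (W o2 o0 * a' + W o2 o1 * b' + W o2 o2 * c' + W o2 o3 * d')
  + d * (W o3 o0 * a' + W o3 o1 * b' + W o3 o2 * c' + W o3 o3 * d').
Proof.
rewrite /bform -mulmxA mulmx_vec4 mxE !big_ord_recl big_ord0 /= !mxE /=; ring.
Qed.

Lemma br_vec4 a b c d a' b' c' d' :
  br (vec4 a b c d) (vec4 a' b' c' d') = vec4 0 (a * b' - b * a') 0 (c * d' - d * c').
Proof.
apply/matrixP=> i j; rewrite !mxE /coord4 !mxE.
move: i; apply: ord4P => /=. all: rewrite ?inordK //=.
Qed.


Let c : R := (Num.sqrt 2)^-1.
Lemma c_gt0 : 0 < c. Proof. by rewrite invr_gt0 sqrtr_gt0 ltr0n. Qed.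
Lemma cc2 : c * c * 2 = 1.
Proof. by rewrite /c -invfM -expr2 sqr_sqrtr ?ler0n // mulVf // pnatr_eq0. Qed.

Lemma iE0 : ((0%Z)%:~R : R) = 0. Proof. by []. Qed.
Lemma iE1 : ((1%Z)%:~R : R) = 1. Proof. by []. Qed.
Lemma iEN1 : (((-1)%Z)%:~R : R) = -1. Proof. by []. Qed.
Definition iE := (iE0, iE1, iEN1).

Lemma J_entries : Jr2r2 R = \matrix_(i, j) (c * (intmx R [:: [:: 0; -1;  0;  1];
              [:: 1;  0;  1;  0];
              [:: 0; -1;  0; -1];
              [:: -1; 0;  1;  0]]%Z) i j).
Proof. by apply/matrixP=> i j; rewrite !mxE. Qed.

Lemma almostJ : almost_complex (Jr2r2 R).
Proof.
rewrite /almost_complex; apply/matrixP=> i j.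
rewrite -[i]fix4E -[j]fix4E !mxE !big_ord_recl big_ord0 /= !mxE.
have h := cc2.
move: i j; apply: ord4P; apply: ord4P => /=; rewrite -/c !iE; nra.
Qed.

Lemma vE0 a b d e : (vec4 a b d e) o0 0 = a. Proof. by rewrite mxE. Qed.
Lemma vE1 a b d e : (vec4 a b d e) o1 0 = b. Proof. by rewrite mxE. Qed.
Lemma vE2 a b d e : (vec4 a b d e) o2 0 = d. Proof. by rewrite mxE. Qed.
Lemma vE3 a b d e : (vec4 a b d e) o3 0 = e. Proof. by rewrite mxE. Qed.
Lemma mE0 (p q r s : 'cV[R]_4) i : (mx4 p q r s) i o0 = p i 0. Proof. by rewrite mxE. Qed.
Lemma mE1 (p q r s : 'cV[R]_4) i : (mx4 p q r s) i o1 = q i 0. Proof. by rewrite mxE. Qed.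
Lemma mE2 (p q r s : 'cV[R]_4) i : (mx4 p q r s) i o2 = r i 0. Proof. by rewrite mxE. Qed.
Lemma mE3 (p q r s : 'cV[R]_4) i : (mx4 p q r s) i o3 = s i 0. Proof. by rewrite mxE. Qed.
Definition vmE := (vE0, vE1, vE2, vE3, mE0, mE1, mE2, mE3).

Lemma det_mx4v p0 p1 p2 p3 q0 q1 q2 q3 r0 r1 r2 r3 s0 s1 s2 s3 :
  \det (mx4 (vec4 p0 p1 p2 p3) (vec4 q0 q1 q2 q3) (vec4 r0 r1 r2 r3) (vec4 s0 s1 s2 s3)) =
  p0 * q1 * r2 * s3
  - p0 * q1 * s2 * r3
  - p0 * r1 * q2 * s3
  + p0 * r1 * s2 * q3
  + p0 * s1 * q2 * r3
  - p0 * s1 * r2 * q3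
  - q0 * p1 * r2 * s3
  + q0 * p1 * s2 * r3
  + q0 * r1 * p2 * s3
  - q0 * r1 * s2 * p3
  - q0 * s1 * p2 * r3
  + q0 * s1 * r2 * p3
  + r0 * p1 * q2 * s3
  - r0 * p1 * s2 * q3
  - r0 * q1 * p2 * s3
  + r0 * q1 * s2 * p3
  + r0 * s1 * p2 * q3
  - r0 * s1 * q2 * p3
  - s0 * p1 * q2 * r3
  + s0 * p1 * r2 * q3
  + s0 * q1 * p2 * r3
  - s0 * q1 * r2 * p3
  - s0 * r1 * p2 * q3
  + s0 * r1 * q2 * p3.
Proof. by rewrite det4 !vmE. Qed.

Lemma JvE a b d e : Jr2r2 R *m vec4 a b d e =
  vec4 (c * (e - b)) (c * (a + d)) (c * (- b - e)) (c * (d - a)).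
Proof. rewrite mulmx_vec4 !mxE /= -/c !iE; congr vec4; ring. Qed.

Lemma pos_aux d P Q : d * 2 = c * c * (P ^+ 2 + 2 * Q ^+ 2) -> d != 0 -> 0 < d.
Proof.
move=> E nz; rewrite lt_def nz /=.
have hS : 0 <= P ^+ 2 + 2 * Q ^+ 2 by rewrite addr_ge0 ?sqr_ge0 // mulr_ge0 ?sqr_ge0.
have : 0 <= c * c * (P ^+ 2 + 2 * Q ^+ 2) by rewrite !mulr_ge0 // ltW // c_gt0.
rewrite -E; lra.
Qed.

Lemma orientJ : induces_std_orientation (Jr2r2 R).
Proof.
split.
  exists (vec4 1 0 0 0), (vec4 0 0 1 0).
  rewrite !JvE det_mx4v.
  apply/eqP => H; have h := cc2; nra.
move=> v w.
rewrite (cV4E v) (cV4E w) !JvE det_mx4v.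
apply: (@pos_aux _ (2 * (v o0 0 * w o2 0 - w o0 0 * v o2 0) - ((- v o1 0 + v o3 0) * (- w o1 0 - w o3 0) - (- w o1 0 + w o3 0) * (- v o1 0 - v o3 0)))
  (v o0 0 * (w o1 0 + w o3 0) - (- v o1 0 + v o3 0) * w o2 0 - (w o0 0 * (v o1 0 + v o3 0) - (- w o1 0 + w o3 0) * v o2 0))).
ring.
Qed.

Lemma vec4_nz a b d e : vec4 a b d e != 0 -> 0 < a ^+ 2 + b ^+ 2 + d ^+ 2 + e ^+ 2.
Proof.
move=> H; rewrite lt_def; apply/andP; split; last first.
  by rewrite !addr_ge0 ?sqr_ge0.
apply: contra H => /eqP E.
have ha : a = 0 by nra.
have hb : b = 0 by nra.
have hd : d = 0 by nra.
have he : e = 0 by nra.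
apply/eqP/matrixP => i j; rewrite !mxE; move: i; apply: ord4P => /=; by rewrite ?ha ?hb ?hd ?he.
Qed.

Lemma tamedJ : tamed (Jr2r2 R) (omega0 R).
Proof.
move=> x; rewrite (cV4E x) => Hx; have := @vec4_nz _ _ _ _ Hx; have := c_gt0.
rewrite JvE bform_vec4 /omega0 !mxE /= !iE; nra.
Qed.

Lemma sympl0 : symplectic (omega0 R).
Proof.
split.
- apply/matrixP => i j; rewrite /omega0 !mxE; move: i j; apply: ord4P; apply: ord4P => /=; rewrite !iE; ring.
- move=> x y z; rewrite (cV4E x) (cV4E y) (cV4E z) !br_vec4 !bform_vec4 /omega0 !mxE /= !iE; ring.
- rewrite det4 /omega0 !mxE /= !iE; apply/eqP => H.
  have : (1 : R) = 0 by rewrite -H; ring.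
  by move/eqP; rewrite oner_eq0.
Qed.

Lemma e_nz a b d e : (a != 0) -> vec4 a b d e != 0.
Proof. by move=> ha; apply/eqP => /matrixP/(_ o0 0); rewrite !mxE /=; apply/eqP. Qed.
Lemma e_nz2 a b d e : (d != 0) -> vec4 a b d e != 0.
Proof. by move=> ha; apply/eqP => /matrixP/(_ o2 0); rewrite !mxE /=; apply/eqP. Qed.

Lemma noncompat : ~ (exists W : 'M[R]_4, symplectic W /\ compatible (Jr2r2 R) W).
Proof.
move=> [W [[H2 Hc Hd] [Ht Hj]]].
have h12 := Hc (vec4 1 0 0 0) (vec4 0 1 0 0) (vec4 0 0 1 0).
have h30 := Hc (vec4 0 0 1 0) (vec4 0 0 0 1) (vec4 1 0 0 0).
rewrite !br_vec4 !bform_vec4 in h12 h30.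
have a21 : W o1 o2 = - W o2 o1 by have := congr1 (fun M : 'M[R]_4 => M o2 o1) (H2 : W^T = - W); rewrite !mxE.
have a10 : W o0 o1 = - W o1 o0 by have := congr1 (fun M : 'M[R]_4 => M o1 o0) (H2 : W^T = - W); rewrite !mxE.
have a32 : W o2 o3 = - W o3 o2 by have := congr1 (fun M : 'M[R]_4 => M o3 o2) (H2 : W^T = - W); rewrite !mxE.
have a03 : W o3 o0 = - W o0 o3 by have := congr1 (fun M : 'M[R]_4 => M o0 o3) (H2 : W^T = - W); rewrite !mxE.
have ht0 := Ht _ (@e_nz 1 0 0 0 (oner_neq0 _)).
have ht2 := Ht _ (@e_nz2 0 0 1 0 (oner_neq0 _)).
have E0 : bform W (vec4 1 0 0 0) (Jr2r2 R *m vec4 1 0 0 0) = c * (W o0 o1 - W o0 o3).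
  by rewrite JvE bform_vec4; ring.
have E2 : bform W (vec4 0 0 1 0) (Jr2r2 R *m vec4 0 0 1 0) = c * (W o2 o1 + W o2 o3).
  by rewrite JvE bform_vec4; ring.
rewrite E0 pmulr_rgt0 ?c_gt0 // in ht0.
rewrite E2 pmulr_rgt0 ?c_gt0 // in ht2.
have hj := Hj (vec4 1 0 0 0) (vec4 0 1 0 0).
have E1 : bform W (Jr2r2 R *m vec4 1 0 0 0) (Jr2r2 R *m vec4 0 1 0 0) =
   c * c * (- W o1 o0 - W o1 o2 + W o3 o0 + W o3 o2).
  by rewrite !JvE bform_vec4; ring.
have E3 : bform W (vec4 1 0 0 0) (vec4 0 1 0 0) = W o0 o1.
  by rewrite bform_vec4; ring.
rewrite E1 E3 in hj.
have hX : (- W o1 o0 - W o1 o2 + W o3 o0 + W o3 o2) = 2 * W o0 o1.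
  rewrite -hj; transitivity ((c * c * 2) * (- W o1 o0 - W o1 o2 + W o3 o0 + W o3 o2)).
    by rewrite cc2 mul1r.
  ring.
lra.
Qed.
End Aux.

Theorem mainTheorem3 (R : rcfType) :
  [/\ almost_complex (Jr2r2 R),
      induces_std_orientation (Jr2r2 R),
      symplectic (omega0 R),
      tamed (Jr2r2 R) (omega0 R)
    & ~ (exists W : 'M[R]_4, symplectic W /\ compatible (Jr2r2 R) W)].
Proof.
split; [exact: almostJ | exact: orientJ | exact: sympl0 | exact: tamedJ | exact: noncompat].
Qed.
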